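(* Let $G$ be a finite simple graph with $m$ vertices, $m\geq 4$, and let $I_G$ be its toric ideal. Then the largest degree $d$ of a binomial in the universal Gr\''obner basis of $I_G$ satisfies $d\leq m-2$.
   Context: For a finite simple graph $G$ with edges $e_1,\dots,e_k$ and a field $\mathbb{K}$, associate to each edge $e=\{v_i,v_j\}$ the vector $a_e=v_i+v_j$ in the free abelian group on the vertices; the toric ideal $I_G\subseteq\mathbb{K}[e_1,\dots,e_k]$ is the ideal generated by all binomials $\mathbf{e}^{u}-\mathbf{e}^{v}$ with $\sum u_i a_{e_i}=\sum v_i a_{e_i}$ (such binomials are homogeneous; their degree is the total degree of either monomial). The universal Gr\''obner basis of an ideal is the union of all its reduced Gr\''obner bases over all term orders. *)

(* Defs.v *)
From HB Require Import structures.
From mathcomp Require Import all_boot all_order all_algebra.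
From mathcomp Require Import mpoly.
Set Implicit Arguments. Unset Strict Implicit. Unset Printing Implicit Defensive.
Import GRing.Theory.
Local Open Scope ring_scope.

(* A finite simple graph on the vertex set 'I_m with k edges e_0..e_(k-1):
   edge i joins vertices eu i and ev i.  Simple: no loops, no parallel edges. *)
Definition simple_graph (m k : nat) (eu ev : 'I_k -> 'I_m) : Prop :=
  (forall i, eu i != ev i) /\
  (forall i j, [set eu i; ev i] = [set eu j; ev j] -> i = j).

(* a_e = v_i + v_j in Z^m (here N^m), as a function of the vertex. *)
Definition edge_vec (m k : nat) (eu ev : 'I_k -> 'I_m) (i : 'I_k) (x : 'I_m) : nat :=
  ((eu i == x) + (ev i == x))%N.

Definition edge_comb (m k : nat) (eu ev : 'I_k -> 'I_m) (u : 'X_{1..k}) (x : 'I_m) : nat :=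
  (\sum_(i < k) u i * edge_vec eu ev i x)%N.

Definition toric_generator (K : fieldType) (m k : nat) (eu ev : 'I_k -> 'I_m)
    (p : {mpoly K[k]}) : Prop :=
  exists u v : 'X_{1..k},
    (forall x, edge_comb eu ev u x = edge_comb eu ev v x) /\ p = 'X_[u] - 'X_[v].

Definition ideal_gen (K : fieldType) (k : nat) (S : {mpoly K[k]} -> Prop)
    (p : {mpoly K[k]}) : Prop :=
  exists gs : seq ({mpoly K[k]} * {mpoly K[k]}),
    (forall x, x \in gs -> S x.2) /\ p = \sum_(x <- gs) x.1 * x.2.

Definition toric_ideal (K : fieldType) (m k : nat) (eu ev : 'I_k -> 'I_m) :=
  ideal_gen (@toric_generator K m k eu ev).

Definition term_order (k : nat) (lt : rel 'X_{1..k}) : Prop :=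
  [/\ irreflexive lt, transitive lt,
      (forall a b, a != b -> lt a b || lt b a),
      (forall a b c, lt a b -> lt (a + c)%MM (b + c)%MM)
    & (forall a, a != 0%MM -> lt 0%MM a)].

Definition lead_mon (K : fieldType) (k : nat) (lt : rel 'X_{1..k})
    (p : {mpoly K[k]}) (mm : 'X_{1..k}) : Prop :=
  mm \in msupp p /\ (forall m', m' \in msupp p -> m' != mm -> lt m' mm).

Definition reduced_groebner (K : fieldType) (k : nat) (lt : rel 'X_{1..k})
    (I : {mpoly K[k]} -> Prop) (G : seq {mpoly K[k]}) : Prop :=
  [/\ (forall g, g \in G -> I g /\ g != 0),
      (* leading terms of G generate the initial ideal *)
      (forall f, I f -> f != 0 -> forall mf, lead_mon lt f mf ->
         exists2 g, g \in G & exists2 mg, lead_mon lt g mg & (mg <= mf)%MM),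
      (forall g, g \in G -> forall mg, lead_mon lt g mg -> g@_mg = 1)
    &
      (forall g h, g \in G -> h \in G -> g != h ->
         forall mh, lead_mon lt h mh -> forall mm, mm \in msupp g -> ~~ (mh <= mm)%MM)].

Definition in_universal_groebner (K : fieldType) (k : nat)
    (I : {mpoly K[k]} -> Prop) (g : {mpoly K[k]}) : Prop :=
  exists lt : rel 'X_{1..k}, exists G : seq {mpoly K[k]},
    [/\ term_order lt, reduced_groebner lt I G & g \in G].

(* Main.v *)
Require Import Defs.
From HB Require Import structures.
From mathcomp Require Import all_boot all_order all_algebra.
From mathcomp Require Import mpoly.
Local Open Scope ring_scope.

From mathcomp Require Import zify.
Set Implicit Arguments. Unset Strict Implicit. Unset Printing Implicit Defensive.
Import GRing.Theory.
Close Scope ring_scope.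

Section WalkComb.
Variable m : nat.
Variable s : nat -> 'I_m.
Variable L : nat.

Definition sig (t : nat) : int := if odd t then (-1)%R else 1%R.
Definition delta (P : pred nat) (x : 'I_m) : int :=
  (\sum_(0 <= t < L) (if P t then sig t * ((s t == x) + (s t.+1 == x))%:Z else 0))%R.
Definition cnt (P : pred nat) : nat := \sum_(0 <= t < L) P t.

Lemma sigS t : sig t.+1 = (- sig t)%R.
Proof. by rewrite /sig /=; case: (odd t); rewrite ?opprK. Qed.

Lemma sig_odd a b : a <= b -> odd (b - a) -> sig b = (- sig a)%R.
Proof. by move=> h; rewrite oddB // /sig; case: (odd a); case: (odd b); rewrite ?opprK. Qed.

Lemma sig_oddP a b : 0 < a -> a <= b -> odd (b - a) -> sig b.-1 = (- sig a.-1)%R.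
Proof.
case: a => // a _; case: b => // b h; rewrite subSS => h2.
exact: sig_odd.
Qed.

Lemma delta_int i j x : i < j -> j <= L ->
  delta (fun t => i <= t < j) x =
  (sig i * (s i == x)%:Z + sig j.-1 * (s j == x)%:Z)%R.
Proof.
move=> hij hjL; rewrite /delta.
rewrite (@big_cat_nat _ _ _ i 0 L) //= ?(leq_trans (ltnW hij)) //.
rewrite (@big_cat_nat _ _ _ j i L) //= ?(ltnW hij) //.
rewrite big1_seq /=; last by move=> t; rewrite mem_index_iota => /andP[_ h]; rewrite leqNgt h.
rewrite add0r [X in (_ + X)%R]big1_seq /=; last first.
  by move=> t; rewrite mem_index_iota => /andP[h _]; rewrite ltnNge h andbF.
rewrite addr0.
rewrite (eq_big_nat _ _ (F2 := fun t => sig t * ((s t == x) + (s t.+1 == x))%:Z)%R); last first.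
  by move=> t ->.
case: j hij hjL => // j hij _ /=.
elim: j hij => [|j IH] hij.
  by case: i hij => // _; rewrite big_nat1 PoszD mulrDr.
rewrite ltnS leq_eqVlt in hij; case/orP: hij => [/eqP-> | hij].
  by rewrite big_nat1 PoszD mulrDr.
rewrite big_nat_recr /=; last exact: ltnW.
rewrite IH // PoszD mulrDr sigS.
by rewrite mulNr addrA addrK.
Qed.

Lemma delta_or (P Q : pred nat) x : (forall t, ~~ (P t && Q t)) ->
  delta (fun t => P t || Q t) x = (delta P x + delta Q x)%R.
Proof.
move=> hPQ; rewrite /delta -big_split /=; apply: eq_bigr => t _.
by have := hPQ t; case: (P t); case: (Q t); rewrite ?addr0 ?add0r.
Qed.

Lemma cnt_pos (P : pred nat) t0 : P t0 -> t0 < L -> 0 < cnt P.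
Proof.
move=> hP ht; rewrite /cnt big_mkord (bigD1 (Ordinal ht)) //= hP.
by rewrite add1n.
Qed.

Lemma cnt_lt (P : pred nat) t1 : ~~ P t1 -> t1 < L -> cnt P < L.
Proof.
move=> hP ht; rewrite /cnt big_mkord (bigD1 (Ordinal ht)) //= (negbTE hP) add0n.
have : \sum_(i < L | i != Ordinal ht) P i <= \sum_(i < L | i != Ordinal ht) 1.
  by apply: leq_sum => i _; case: (P i).
move/leq_ltn_trans; apply.
have := sum1_card (predC1 (Ordinal ht)); rewrite /= => ->.
by rewrite cardC1 card_ord; case: L ht.
Qed.

Hypotheses (HLe : ~~ odd L) (HL0 : 0 < L) (HL2 : L != 2) (Hcl : s L = s 0)
  (Hnl : forall t, t < L -> s t != s t.+1)
  (Hprim : forall P, (forall x, delta P x = 0%R) -> cnt P = 0 \/ cnt P = L).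

Lemma chord_odd p q : p < q -> q < L -> s p = s q -> odd (q - p).
Proof.
move=> hpq hqL hs; apply/negPn/negP => hev.
have hd : forall x, delta (fun t => p <= t < q) x = 0%R.
  move=> x; rewrite delta_int //; last exact: ltnW.
  rewrite -hs.
  have : sig q.-1 = (- sig p)%R.
    case: q hpq hqL hs hev => // q hpq _ _ hev /=.
    rewrite /sig; move: hev; rewrite oddB ?(ltnW hpq) //=.
    by case: (odd p); case: (odd q).
  by move=> ->; rewrite mulNr subrr.
case: (Hprim hd) => hc.
  have h1 := @cnt_pos (fun t => p <= t < q) p.
  rewrite hc ltnn leqnn hpq in h1.
  by have := h1 isT (ltn_trans hpq hqL).
have h1 := @cnt_lt (fun t => p <= t < q) q.
rewrite hc ltnn ltnn andbF in h1.
by have := h1 isT hqL.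
Qed.

Lemma chord_odd2 a b : a != b -> a < L -> b < L -> s a = s b -> odd (a + b).
Proof.
move=> hab ha hb hs; case: (ltngtP a b) => h.
- have := chord_odd h hb hs; rewrite oddB ?(ltnW h) // oddD.
  by case: (odd a); case: (odd b).
- have := chord_odd h ha (esym hs); rewrite oddB ?(ltnW h) // oddD.
  by case: (odd a); case: (odd b).
- by rewrite h eqxx in hab.
Qed.

Lemma notriple a b c : a != b -> b != c -> a != c -> a < L -> b < L -> c < L ->
  s a = s b -> s b = s c -> False.
Proof.
move=> hab hbc hac ha hb hc h1 h2.
have o1 := chord_odd2 hab ha hb h1.
have o2 := chord_odd2 hbc hb hc h2.
have o3 := chord_odd2 hac ha hc (etrans h1 h2).
by move: o1 o2 o3; rewrite !oddD; case: (odd a); case: (odd b); case: (odd c).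
Qed.

Lemma nocross p1 p2 q1 q2 : p1 < p2 -> p2 < q1 -> q1 < q2 -> q2 < L ->
  s p1 = s q1 -> s p2 = s q2 -> False.
Proof.
move=> h1 h2 h3 h4 e1 e2.
have o1 := chord_odd (ltn_trans h1 h2) (ltn_trans h3 h4) e1.
have o2 := chord_odd (ltn_trans h2 h3) h4 e2.
pose P := fun t => p1 <= t < p2.
pose Q := fun t => q1 <= t < q2.
have dis : forall t, ~~ (P t && Q t).
  move=> t; rewrite /P /Q; apply/negP => /andP[/andP[_ a] /andP[b _]].
  by have := leq_trans (ltn_trans a h2) b; rewrite ltnn.
have hd : forall x, delta (fun t => P t || Q t) x = 0%R.
  move=> x; rewrite delta_or // /P /Q.
  rewrite (@delta_int p1 p2) //; last exact: leq_trans (ltnW h2) (ltnW (ltn_trans h3 h4)).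
  rewrite (@delta_int q1 q2) //; last exact: ltnW.
  rewrite -e1 -e2.
  rewrite (@sig_odd p1 q1) ?(ltnW (ltn_trans h1 h2)) //.
  rewrite (@sig_oddP p2 q2) ?(ltnW (ltn_trans h2 h3)) //; last exact: leq_ltn_trans (leq0n p1) h1.
  rewrite !mulNr. 
  set A := (sig p1 * _)%R; set B := (sig p2.-1 * _)%R.
  by rewrite addrACA !subrr.
case: (Hprim hd) => hc.
  have := cnt_pos (P := fun t => P t || Q t) (t0 := p1).
  by rewrite /P leqnn h1 hc /= => /(_ isT (ltn_trans h1 (ltn_trans h2 (ltn_trans h3 h4)))).
have := cnt_lt (P := fun t => P t || Q t) (t1 := p2).
rewrite /P /Q ltnn andbF leqNgt h2 /= hc ltnn.
by move=> /(_ isT (ltn_trans h2 (ltn_trans h3 h4))).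
Qed.


Definition cntv (x : 'I_m) : nat := #|[set i : 'I_L | s i == x]|.
Definition once (t : nat) : bool := cntv (s t) == 1.

Lemma partner t : t < L -> ~~ once t -> exists t', [/\ t' < L, t' != t & s t' = s t].
Proof.
move=> ht hno.
have hin : Ordinal ht \in [set i : 'I_L | s i == s t] by rewrite inE.
have : 1 < cntv (s t).
  rewrite ltn_neqAle eq_sym hno /= /cntv card_gt0; apply/set0Pn; by exists (Ordinal ht).
case/card_gt1P => a [b [ha hb hab]].
rewrite !inE in ha hb.
case: (eqVneq (val a) t) => hat.
  exists (val b); split; [exact: ltn_ord | | exact/eqP].
  apply: contra hab => /eqP hbt; apply/eqP/val_inj; by rewrite /= hbt hat.
exists (val a); split; [exact: ltn_ord | exact: hat | exact/eqP].
Qed.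

Lemma cntv_le2 x : cntv x <= 2.
Proof.
rewrite leqNgt; apply/negP => /card_gt2P [a [b [c [[ha hb hc] [hab hbc hca]]]]].
rewrite !inE in ha hb hc.
apply: (@notriple a b c) => //.
- by rewrite eq_sym.
- by rewrite (eqP ha) (eqP hb).
- by rewrite (eqP hb) (eqP hc).
Qed.

Lemma two_mem (A : {set 'I_L}) a b : a \in A -> b \in A -> a != b -> 2 <= #|A|.
Proof.
move=> ha hb hab; have <- : #|[set a; b]| = 2 by rewrite cards2 hab.
by apply: subset_leq_card; apply/subsetP => z; rewrite !inE => /orP[]/eqP->.
Qed.

Lemma chord_len p q : p < q -> q < L -> s p = s q -> p.+3 <= q.
Proof.
move=> hpq hqL hs; have ho := chord_odd hpq hqL hs.
case: (ltngtP q p.+1) => h1.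
- by rewrite ltnS leqNgt hpq in h1.
- case: (ltngtP q p.+2) => h2.
  + by rewrite ltnS leqNgt h1 in h2.
  + by [].
  + by move: ho; rewrite h2 subSn // subSn // subnn.
- have hpL : p < L by apply: ltn_trans hqL.
  by have := Hnl hpL; rewrite -h1 hs eqxx.
Qed.


Lemma inside d : forall p q, q - p <= d -> p < q -> q < L -> s p = s q ->
  2 <= #|[set t : 'I_L | (p < t < q) && once t]|.
Proof.
elim: d => [|d IH] p q hd hpq hqL hs.
  by move: hd; rewrite leqn0 subn_eq0 leqNgt hpq.
have h3 := chord_len hpq hqL hs.
case: (boolP [forall t : 'I_L, (p < t < q) ==> once t]) => hall.
  have key : forall t : 'I_L, p < t < q -> t \in [set t : 'I_L | (p < t < q) && once t].
    by move=> t ht; rewrite inE ht (implyP (forallP hall t) ht).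
  have h1 : p.+1 < L by lia.
  have h2 : p.+2 < L by lia.
  apply: (@two_mem _ (Ordinal h1) (Ordinal h2)).
  - by apply: key => /=; apply/andP; split; lia.
  - by apply: key => /=; apply/andP; split; lia.
  - by rewrite -val_eqE /= ltn_eqF.
case/forallPn: hall => t; rewrite negb_imply => /andP[/andP[c1 c2] hno].
have [t' [ht'L ht't hs']] := partner (ltn_ord t) hno.
have htL := ltn_ord t.
case: (ltngtP t' p) => d1.
- by exfalso; apply: (@nocross t' p t q).
- case: (ltngtP t' q) => d2.
  + case: (ltngtP t t') => d3.
    * apply: leq_trans (IH t t' _ d3 ht'L (esym hs')) _.
        lia.
      apply: subset_leq_card; apply/subsetP => z; rewrite !inE => /andP[/andP[a b] o].
      by rewrite o andbT; apply/andP; split; lia.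
    * apply: leq_trans (IH t' t _ d3 htL hs') _.
        lia.
      apply: subset_leq_card; apply/subsetP => z; rewrite !inE => /andP[/andP[a b] o].
      by rewrite o andbT; apply/andP; split; lia.
    * by rewrite d3 eqxx in ht't.
  + by exfalso; apply: (@nocross p t q t') => //; rewrite hs'.
  + exfalso; apply: (@notriple p t q); first [lia | congruence].
- exfalso; apply: (@notriple p t q); first [lia | congruence].
Qed.


Lemma inside_sub a b (A : {set 'I_L}) : a < b -> b < L -> s a = s b ->
  (forall t : 'I_L, a < t < b -> once t -> t \in A) -> 2 <= #|A|.
Proof.
move=> hab hbL hs hA; apply: leq_trans (@inside (b - a) a b (leqnn _) hab hbL hs) _.
apply: subset_leq_card; apply/subsetP => z; rewrite inE => /andP[h o]; exact: hA.
Qed.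

Lemma outside d : forall p q, p + (L - q) <= d -> p < q -> q < L -> s p = s q ->
  2 <= #|[set t : 'I_L | ((t < p) || (q < t)) && once t]|.
Proof.
elim: d => [|d IH] p q hd hpq hqL hs; first by lia.
have ho := chord_odd hpq hqL hs.
have hout : 3 <= p + (L - q).
  have e : p + (L - q) = L - (q - p) by lia.
  have od : odd (p + (L - q)).
    rewrite e oddB; last by lia.
    by move: HLe ho; case: (odd L); case: (odd (q - p)).
  have n1 : p + (L - q) != 1.
    apply/eqP => h1.
    have hp0 : p = 0 by lia.
    have hq : q = L.-1 by lia.
    have hL1 : L.-1 < L by lia.
    have := Hnl hL1; rewrite prednK // -hq -hs hp0 Hcl eqxx.
    by [].
  move: od n1; case: (p + (L - q)) => [|[|[|n]]] //.
case: (boolP [forall t : 'I_L, ((t < p) || (q < t)) ==> once t]) => hall.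
  set S := [set t : 'I_L | ((t < p) || (q < t)) && once t].
  have key : forall t : 'I_L, ((t < p) || (q < t)) -> t \in S.
    by move=> t ht; rewrite inE ht (implyP (forallP hall t) ht).
  case: (leqP 2 p) => h2p.
    have h0 : 0 < L by lia.
    have h1 : 1 < L by lia.
    apply: (@two_mem _ (Ordinal h0) (Ordinal h1)).
    - by apply: key => /=; apply/orP; left; lia.
    - by apply: key => /=; apply/orP; left; lia.
    - by rewrite -val_eqE.
  case: (leqP 1 p) => h1p.
    have h0 : 0 < L by lia.
    have h1 : L.-1 < L by lia.
    apply: (@two_mem _ (Ordinal h0) (Ordinal h1)).
    - by apply: key => /=; apply/orP; left; lia.
    - by apply: key => /=; apply/orP; right; lia.
    - rewrite -val_eqE /=; apply/eqP; lia.
  have h0 : L.-2 < L by lia.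
  have h1 : L.-1 < L by lia.
  apply: (@two_mem _ (Ordinal h0) (Ordinal h1)).
  - by apply: key => /=; apply/orP; right; lia.
  - by apply: key => /=; apply/orP; right; lia.
  - rewrite -val_eqE /=; apply/eqP; lia.
case/forallPn: hall => t; rewrite negb_imply => /andP[htout hno].
have [t' [ht'L ht't hs']] := partner (ltn_ord t) hno.
have htL := ltn_ord t.
set S := [set t : 'I_L | ((t < p) || (q < t)) && once t].
have inS : forall z : 'I_L, (z < p) || (q < z) -> once z -> z \in S.
  by move=> z h o; rewrite inE h o.
case: (ltngtP t' p) => d1.
- case/orP: htout => ht.
  + case: (ltngtP t t') => d3.
    * apply: (@inside_sub t t') => // z /andP[a b] o; apply: inS => //; apply/orP; left; lia.
    * apply: (@inside_sub t' t) => // z /andP[a b] o; apply: inS => //; apply/orP; left; lia.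
    * by rewrite d3 eqxx in ht't.
  + apply: leq_trans (IH t' t _ _ htL hs') _; [lia | lia |].
    apply: subset_leq_card; apply/subsetP => z; rewrite inE => /andP[h o].
    by apply: inS => //; case/orP: h => h; apply/orP; [left|right]; lia.
- case: (ltngtP t' q) => d2.
  + case/orP: htout => ht.
    * by exfalso; apply: (@nocross t p t' q) => //; rewrite hs'.
    * by exfalso; apply: (@nocross p t' q t).
  + case/orP: htout => ht.
    * apply: leq_trans (IH t t' _ _ ht'L (esym hs')) _; [lia | lia |].
      apply: subset_leq_card; apply/subsetP => z; rewrite inE => /andP[h o].
      by apply: inS => //; case/orP: h => h; apply/orP; [left|right]; lia.
    * case: (ltngtP t t') => d3.
      - apply: (@inside_sub t t') => // z /andP[a b] o; apply: inS => //; apply/orP; right; lia.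
      - apply: (@inside_sub t' t) => // z /andP[a b] o; apply: inS => //; apply/orP; right; lia.
      - by rewrite d3 eqxx in ht't.
  + exfalso; case/orP: htout => ht; apply: (@notriple p t q); first [lia | congruence].
- exfalso; case/orP: htout => ht; apply: (@notriple p t q); first [lia | congruence].
Qed.


Lemma four_once : 4 <= #|[set t : 'I_L | once t]|.
Proof.
case: (boolP [exists p : 'I_L, exists q : 'I_L, (p < q) && (s p == s q)]) => hc.
  case/existsP: hc => p /existsP [q /andP[hpq /eqP hs]].
  have hi := @inside (q - p) p q (leqnn _) hpq (ltn_ord q) hs.
  have ho := @outside (p + (L - q)) p q (leqnn _) hpq (ltn_ord q) hs.
  set A := [set t : 'I_L | (p < t < q) && once t] in hi.
  set B := [set t : 'I_L | ((t < p) || (q < t)) && once t] in ho.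
  have dis : A :&: B = set0.
    apply/setP => z; rewrite !inE.
    case: (p < z < q) / andP => [[a b]|//]; rewrite ltnNge (ltnW a) /= ltnNge (ltnW b) /=.
    by rewrite andbF.
  have hU : #|A :|: B| = #|A| + #|B| by rewrite cardsU dis cards0 subn0.
  have sub : A :|: B \subset [set t : 'I_L | once t].
    by apply/subsetP => z; rewrite !inE => /orP[]/andP[_ ->].
  have := subset_leq_card sub; rewrite hU; lia.
have hall : forall t : 'I_L, once t.
  move=> t; apply/negPn/negP => hno.
  have [t' [ht'L ht't hs']] := partner (ltn_ord t) hno.
  case: (ltngtP t t') => d3.
  - move/existsPn: hc => /(_ t) /existsPn /(_ (Ordinal ht'L)).
    by rewrite /= d3 hs' eqxx.
  - move/existsPn: hc => /(_ (Ordinal ht'L)) /existsPn /(_ t).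
    by rewrite /= d3 hs' eqxx.
  - by rewrite d3 eqxx in ht't.
have -> : [set t : 'I_L | once t] = [set: 'I_L] by apply/setP => t; rewrite !inE hall.
rewrite cardsT card_ord.
have h : forall n, ~~ odd n -> 0 < n -> n != 2 -> 4 <= n by case=> [|[|[|[|n]]]].
exact: h.
Qed.

Lemma count_id (F : 'I_m -> nat) : \sum_(t < L) F (s t) = \sum_(x < m) cntv x * F x.
Proof.
rewrite (partition_big (fun t : 'I_L => s t) predT) //=.
apply: eq_bigr => x _.
rewrite (eq_bigr (fun _ => F x)); last by move=> t /eqP <-.
by rewrite sum_nat_cond_const.
Qed.

Lemma walk_bound : L + 4 <= 2 * m.
Proof.
have h4 := four_once.
have e1 : L = \sum_(x < m) cntv x * 1.
  by rewrite -count_id sum_nat_const card_ord muln1.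
have e2 : #|[set t : 'I_L | once t]| = \sum_(x < m) cntv x * (cntv x == 1).
  by rewrite -count_id -sum1dep_card big_mkcond /=; apply: eq_bigr => t _; rewrite /once; case: (_ == 1).
have : L + #|[set t : 'I_L | once t]| <= 2 * m.
  rewrite {1}e1 e2 -big_split /=.
  have -> : 2 * m = \sum_(x < m) 2 by rewrite sum_nat_const card_ord mulnC.
  apply: leq_sum => x _; have := cntv_le2 x.
  by case: (cntv x) => [|[|[|n]]].
lia.
Qed.

End WalkComb.

Section Graph.
Variables (m k : nat) (eu ev : 'I_k -> 'I_m).
Hypothesis Hloop : forall i, eu i != ev i.
Hypothesis Huniq : forall i j, [set eu i; ev i] = [set eu j; ev j] -> i = j.

Local Notation A := (edge_comb eu ev).

Lemma A_add a b x : A (a + b)%MM x = A a x + A b x.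
Proof. rewrite /edge_comb -big_split; apply: eq_bigr => i _; by rewrite mnmDE mulnDl. Qed.

Lemma A_0 x : A 0%MM x = 0.
Proof. by rewrite /edge_comb big1 // => i _; rewrite mnm0E. Qed.

Lemma A_U i x : A U_(i)%MM x = edge_vec eu ev i x.
Proof.
rewrite /edge_comb (bigD1 i) //= mnm1E eqxx mul1n big1 ?addn0 // => j hj.
by rewrite mnm1E eq_sym (negbTE hj).
Qed.

Lemma A_sum (I : Type) (r : seq I) (P : pred I) F x :
  A (\sum_(t <- r | P t) F t)%MM x = \sum_(t <- r | P t) A (F t) x.
Proof. by apply: (big_morph (fun a => A a x)) => [a b|]; [apply: A_add | apply: A_0]. Qed.

Lemma A_sub a u x : (a <= u)%MM -> A (u - a)%MM x = A u x - A a x.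
Proof. by move=> h; rewrite -{2}(submK h) A_add addnK. Qed.

Lemma sum_pred1 (a : 'I_m) : \sum_(x < m) (a == x) = 1.
Proof. by rewrite (bigD1 a) //= eqxx big1 // => x hx; rewrite eq_sym (negbTE hx). Qed.

Lemma sum_ev i : \sum_(x < m) edge_vec eu ev i x = 2.
Proof. by rewrite /edge_vec big_split /= !sum_pred1. Qed.

Lemma sumA a : \sum_(x < m) A a x = 2 * mdeg a.
Proof.
rewrite /edge_comb exchange_big /= mdegE big_distrr /=; apply: eq_bigr => i _.
by rewrite -big_distrr /= sum_ev mulnC.
Qed.

Lemma A_eq_mdeg a b : (forall x, A a x = A b x) -> mdeg a = mdeg b.
Proof.
move=> h; have : 2 * mdeg a = 2 * mdeg b by rewrite -!sumA; apply: eq_bigr => x _.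
lia.
Qed.

Lemma A0_eq0 a : (forall x, A a x = 0) -> a = 0%MM.
Proof.
move=> h; apply/eqP; rewrite -mdeg_eq0.
have : 2 * mdeg a = 0 by rewrite -sumA big1.
lia.
Qed.

Lemma lem_addP (a b c d : 'X_{1..k}) : (a <= b)%MM -> (c <= d)%MM -> (a + c <= b + d)%MM.
Proof.
move=> /mnm_lepP h1 /mnm_lepP h2; apply/mnm_lepP => i; rewrite !mnmDE.
exact: leq_add.
Qed.

Definition em (x y : 'I_m) : 'X_{1..k} :=
  (\sum_(i < k | [set eu i; ev i] == [set x; y]) U_(i))%MM.
Definition adj (x y : 'I_m) := exists i, [set eu i; ev i] = [set x; y].

Lemma em_U i x y : [set eu i; ev i] = [set x; y] -> em x y = U_(i)%MM.
Proof.
move=> hi; rewrite /em (bigD1 i) /=; last by rewrite hi.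
rewrite big1 ?addm0 // => j /andP[/eqP hj hji].
by move: hji; rewrite (Huniq (etrans hj (esym hi))) eqxx.
Qed.

Lemma emC x y : em x y = em y x.
Proof. by rewrite /em [[set y; x]]setUC. Qed.

Lemma adj_neq x y : adj x y -> x != y.
Proof.
case=> i hi; apply/eqP => exy; move: hi; rewrite exy setUid => h.
have : eu i \in [set y] by rewrite -h !inE eqxx.
have : ev i \in [set y] by rewrite -h !inE eqxx orbT.
rewrite !inE => /eqP e1 /eqP e2.
by move: (Hloop i); rewrite e1 e2 eqxx.
Qed.

Lemma set2_count (a b c d z : 'I_m) : a != b -> c != d -> [set a; b] = [set c; d] ->
  (a == z) + (b == z) = (c == z) + (d == z).
Proof.
move=> hab hcd h.
have hm : (z \in [set a; b]) = (z \in [set c; d]) by rewrite h.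
rewrite !inE in hm.
have f : forall p q : 'I_m, p != q -> (p == z) + (q == z) = ((z == p) || (z == q)).
  move=> p q hpq; rewrite ![_ == z]eq_sym.
  case: (eqVneq z p) => [->|_]; last by case: (z == q).
  by rewrite (negbTE hpq).
by rewrite !f // hm.
Qed.

Lemma A_em x y z : adj x y -> A (em x y) z = (x == z) + (y == z).
Proof.
move=> hxy; have hn := adj_neq hxy; case: hxy => i hi.
by rewrite (em_U hi) A_U /edge_vec (@set2_count _ _ _ _ _ (Hloop i) hn hi).
Qed.

Lemma mdeg_em x y : adj x y -> mdeg (em x y) = 1.
Proof. by case=> i hi; rewrite (em_U hi) mdeg1. Qed.


Definition wred (P : pred nat) (s : nat -> 'I_m) (L : nat) : 'X_{1..k} :=
  (\sum_(0 <= t < L) (if P t && ~~ odd t then em (s t) (s t.+1) else 0%MM))%MM.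
Definition wblue (P : pred nat) (s : nat -> 'I_m) (L : nat) : 'X_{1..k} :=
  (\sum_(0 <= t < L) (if P t && odd t then em (s t) (s t.+1) else 0%MM))%MM.

Lemma wle (P c : pred nat) (s : nat -> 'I_m) L :
  ((\sum_(0 <= t < L) (if P t && c t then em (s t) (s t.+1) else 0%MM))
   <= (\sum_(0 <= t < L) (if true && c t then em (s t) (s t.+1) else 0%MM)))%MM.
Proof.
apply/mnm_lepP => i; rewrite !mnm_sumE; apply: leq_sum => t _.
by case: (P t); case: (c t) => //=; rewrite mnm0E.
Qed.

Lemma A_if (b : bool) e x : A (if b then e else 0%MM) x = if b then A e x else 0.
Proof. by case: b; rewrite ?A_0. Qed.

Lemma wdelta P s L x : (forall t, t < L -> adj (s t) (s t.+1)) ->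
  ((A (wred P s L) x)%:Z - (A (wblue P s L) x)%:Z)%R = delta s L P x.
Proof.
move=> hadj; rewrite /wred /wblue /delta !A_sum.
rewrite !(big_morph Posz PoszD (erefl _)) -sumrB.
apply: eq_big_nat => t /andP[_ ht]; rewrite !A_if A_em; last exact: hadj.
rewrite /sig; case: (P t); case: (odd t) => /=; rewrite ?sub0r ?subr0 ?mulN1r ?mul1r //.
Qed.

Lemma wcnt P s L : (forall t, t < L -> adj (s t) (s t.+1)) ->
  mdeg (wred P s L) + mdeg (wblue P s L) = cnt L P.
Proof.
move=> hadj; rewrite /wred /wblue /cnt !mdeg_sum -big_split /=.
apply: eq_big_nat => t /andP[_ ht].
by case: (P t); case: (odd t) => /=; rewrite ?mdeg_em ?mdeg0 //; apply: hadj.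
Qed.

Lemma pos_sum_ex (F : 'I_k -> nat) : 0 < \sum_(i < k) F i -> exists i, 0 < F i.
Proof.
case: (pickP (fun i => 0 < F i)) => [i hi|h0]; first by exists i.
by rewrite big1 // => i _; have := h0 i; rewrite /= lt0n => /negbT; rewrite negbK => /eqP.
Qed.

Lemma edge_at (b : 'X_{1..k}) y : 0 < A b y ->
  exists i z, [/\ [set eu i; ev i] = [set y; z], (U_(i) <= b)%MM & adj y z].
Proof.
rewrite /edge_comb => /pos_sum_ex [i]; rewrite muln_gt0 => /andP[hbi hy].
have hU : (U_(i) <= b)%MM by rewrite lep1mP -lt0n.
rewrite /edge_vec in hy.
case: (eqVneq (eu i) y) => e.
  exists i, (ev i); split => //; first by rewrite e.
  by exists i; rewrite e.
have e2 : ev i = y by move: hy; rewrite (negbTE e) /=; case: eqP.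
exists i, (eu i); split => //; first by rewrite e2 setUC.
by exists i; rewrite e2 setUC.
Qed.

Lemma A_em_U i y z v : [set eu i; ev i] = [set y; z] -> A U_(i)%MM v = (y == v) + (z == v).
Proof.
move=> h; have ha : adj y z by exists i.
by rewrite -(em_U h) A_em.
Qed.

Lemma big2 (F : nat -> 'X_{1..k}) L : 
  (\sum_(0 <= t < L.+2) F t = F 0%N + F 1%N + \sum_(0 <= t < L) F t.+2)%MM.
Proof. by rewrite big_nat_recl // big_nat_recl // addmA. Qed.

Lemma big1n (F : nat -> 'X_{1..k}) L : 
  (\sum_(0 <= t < L.+1) F t = F 0%N + \sum_(0 <= t < L) F t.+1)%MM.
Proof. by rewrite big_nat_recl. Qed.

Lemma build n : forall (r b : 'X_{1..k}) (y x0 : 'I_m), mdeg r + mdeg b < n ->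
  (forall z, A b z = A r z + (z == y) + (z == x0)) ->
  exists L (s : nat -> 'I_m), [/\ odd L, s 0 = y, s L = x0,
     (forall t, t < L -> adj (s t) (s t.+1))
     & ((wred predT s L <= b)%MM /\ (wblue predT s L <= r)%MM)].
Proof.
elim: n => [|n IH] r b y x0 hn hb; first by [].
have : 0 < A b y by rewrite hb eqxx; lia.
case/edge_at => i [z [hi hUb hadj]].
have hyz := adj_neq hadj.
set b' := (b - U_(i))%MM.
have eb : b = (b' + U_(i))%MM by rewrite submK.
have hb' v : A b v = A b' v + ((y == v) + (z == v)).
  by rewrite {1}eb A_add (A_em_U _ hi).
case: (eqVneq z x0) => hzx.
  exists 1, (fun t => if t is 0 then y else x0); split => //; last split.
  - by case => // _; rewrite -hzx.
  - rewrite /wred big_nat1 /= -hzx (em_U hi); exact: hUb.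
  - by rewrite /wblue big_nat1 /=; apply/mnm_lepP => j; rewrite mnm0E.
have : 0 < A r z.
  have := hb z; rewrite hb' eqxx (negbTE hzx) (negbTE hyz) eq_sym (negbTE hyz); lia.
case/edge_at => j [z' [hj hUr hadj']].
set r' := (r - U_(j))%MM.
have er : r = (r' + U_(j))%MM by rewrite submK.
have hr' v : A r v = A r' v + ((z == v) + (z' == v)).
  by rewrite {1}er A_add (A_em_U _ hj).
have hmd : mdeg r' + mdeg b' < n.
  move: hn; rewrite {1}er {1}eb !mdegD !mdeg1; lia.
have hcond : forall v, A b' v = A r' v + (v == z') + (v == x0).
  move=> v; have := hb v; rewrite hb' hr' ![_ == v]eq_sym; lia.
have [L0 [s0 [hodd hs0 hsL hadj0 [hR hB]]]] := IH r' b' z' x0 hmd hcond.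
exists L0.+2, (fun t => match t with 0 => y | 1 => z | t'.+2 => s0 t' end); split => //.
- by rewrite /= negbK.
- case=> [|[|t]] ht //=; first by rewrite hs0.
  by apply: hadj0.
split.
- rewrite /wred big2 /= (em_U hi) addm0 eb addmC.
  apply: lem_addP; last exact: lepm_refl.
  apply: lepm_trans hR; rewrite /wred; apply/mnm_lepP => v; rewrite !mnm_sumE.
  by apply: leq_sum => t _; rewrite negbK.
- rewrite /wblue big2 /= add0m. rewrite hs0 (em_U hj) er addmC.
  apply: lem_addP; last exact: lepm_refl.
  apply: lepm_trans hB; rewrite /wblue; apply/mnm_lepP => v; rewrite !mnm_sumE.
  by apply: leq_sum => t _; rewrite negbK.
Qed.


Lemma walk_exists u w : (forall x, A u x = A w x) -> u != 0%MM ->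
  exists L (s : nat -> 'I_m), [/\ ~~ odd L, 0 < L, s L = s 0,
     (forall t, t < L -> adj (s t) (s t.+1))
     & ((wred predT s L <= u)%MM /\ (wblue predT s L <= w)%MM)].
Proof.
move=> hA hu0.
have : 0 < mdeg u by rewrite lt0n mdeg_eq0.
rewrite mdegE => /pos_sum_ex [i hi].
have hU : (U_(i) <= u)%MM by rewrite lep1mP -lt0n.
set r := (u - U_(i))%MM.
have eu' : u = (r + U_(i))%MM by rewrite submK.
have hadj : adj (eu i) (ev i) by exists i.
have hcond : forall z, A w z = A r z + (z == ev i) + (z == eu i).
  move=> z; rewrite -hA {1}eu' A_add A_U /edge_vec ![_ == z]eq_sym; lia.
have [L0 [s0 [hodd hs0 hsL hadj0 [hR hB]]]] :=
  @build (mdeg r + mdeg w).+1 r w (ev i) (eu i) (ltnSn _) hcond.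
exists L0.+1, (fun t => if t is t'.+1 then s0 t' else eu i); split => //.
- by rewrite /= hodd.
- by case=> [|t] ht /=; [rewrite hs0 | apply: hadj0].
split.
- rewrite /wred big1n /= hs0 (em_U (erefl _)) eu' addmC.
  apply: lem_addP; last exact: lepm_refl.
  apply: lepm_trans hB; rewrite /wblue; apply/mnm_lepP => v; rewrite !mnm_sumE.
  by apply: leq_sum => t _; rewrite negbK.
- rewrite /wblue big1n /= add0m.
  apply: lepm_trans hR; rewrite /wred; apply/mnm_lepP => v; rewrite !mnm_sumE.
  by apply: leq_sum => t _.
Qed.

Lemma core u w : (forall x, A u x = A w x) -> u != w ->
  (forall a b, (a <= u)%MM -> (b <= w)%MM -> (forall x, A a x = A b x) ->
     (a = 0%MM /\ b = 0%MM) \/ (a = u /\ b = w)) ->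
  mdeg u + 2 <= m.
Proof.
move=> hA huw hprim.
have hu0 : u != 0%MM.
  apply: contra huw => /eqP hu; apply/eqP; rewrite hu; apply/esym/A0_eq0 => x.
  by rewrite -hA hu A_0.
have [L [s [hev hL0 hcl hadj [hR hB]]]] := walk_exists hA hu0.
have hcntT : cnt L predT = L.
  by rewrite /cnt sum_nat_const_nat subn0 muln1.
have hdel0 : forall x, delta s L predT x = 0%R.
  move=> x; have -> : delta s L predT x = delta s L (fun t => 0 <= t < L) x.
    by apply: eq_big_nat => t /andP[_ ht] /=; rewrite ht.
  rewrite delta_int // hcl (@sig_oddP 1 L) //; last by rewrite oddB // addbT.
  by rewrite mulNr /sig /= subrr.
have hAeq : forall (P : pred nat) x, delta s L P x = 0%R ->
    A (wred P s L) x = A (wblue P s L) x.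
  move=> P x; rewrite -(wdelta _ _ hadj) => /eqP; rewrite subr_eq0 => /eqP [].
  by [].
have [[hR0 hB0]|[eR eB]] := hprim _ _ hR hB (fun x => hAeq predT x (hdel0 x)).
  have := wcnt predT hadj; rewrite hR0 hB0 mdeg0 hcntT => hL.
  by rewrite -hL in hL0.
have hmd : mdeg u + mdeg w = L by rewrite -eR -eB wcnt.
have hmd2 : mdeg u = mdeg w := A_eq_mdeg hA.
suff : L + 4 <= 2 * m by lia.
apply: (@walk_bound m s L) => //.
- apply/eqP => hL2; move: eR eB huw; rewrite /wred /wblue hL2 big2 big2 !big_geq //=.
  by rewrite !addm0 !add0m -hL2 hcl emC => <- <-; rewrite eqxx.
- by move=> t ht; apply: adj_neq; apply: hadj.
- move=> P hP.
  have hle1 : (wred P s L <= u)%MM by rewrite -eR; exact: wle.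
  have hle2 : (wblue P s L <= w)%MM by rewrite -eB; exact: wle.
  have [[h1 h2]|[h1 h2]] := hprim _ _ hle1 hle2 (fun x => hAeq P x (hP x)).
    by left; rewrite -(wcnt P hadj) h1 h2 mdeg0.
  by right; rewrite -(wcnt P hadj) h1 h2.
Qed.

End Graph.

Open Scope ring_scope.

Section Fiber.
Variables (K : fieldType) (m k : nat) (eu ev : 'I_k -> 'I_m).
Local Notation A := (edge_comb eu ev).

Definition Amap (mm : 'X_{1..k}) : 'X_{1..m} := [multinom A mm x | x < m].
Definition lq : k.-tuple {mpoly K[m]} := [tuple 'X_[(U_(eu i) + U_(ev i))%MM] | i < k].

Lemma Amap_eq a b : (forall x, A a x = A b x) -> Amap a = Amap b.
Proof. by move=> h; apply/mnmP => x; rewrite !mnmE h. Qed.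

Lemma compX (mm : 'X_{1..k}) : \prod_(i < k) tnth lq i ^+ mm i = 'X_[Amap mm] :> {mpoly K[m]}.
Proof.
under eq_bigr => i _ do rewrite tnth_mktuple mpolyXn.
rewrite mprodXE; congr 'X_[_]; apply/mnmP => x.
rewrite mnm_sumE mnmE /edge_comb; apply: eq_bigr => i _.
by rewrite mulmnE mnmDE !mnm1E mulnC.
Qed.

Lemma comp_gen (p : {mpoly K[k]}) : toric_generator eu ev p -> p \mPo lq = 0.
Proof.
case=> [u [v [h ->]]].
by rewrite rmorphB /= !comp_mpolyX !compX (Amap_eq h) subrr.
Qed.

Lemma comp_ideal (f : {mpoly K[k]}) : toric_ideal eu ev f -> f \mPo lq = 0.
Proof.
case=> [gs [hgs ->]]; rewrite rmorph_sum /=; apply: big1_seq => x /andP[_ hx].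
by rewrite rmorphM /= (comp_gen (hgs x hx)) mulr0.
Qed.

Lemma fiber_sum (f : {mpoly K[k]}) T : toric_ideal eu ev f ->
  \sum_(mm <- msupp f | Amap mm == T) f@_mm = 0.
Proof.
move=> hf; have h := congr1 (mcoeff T) (comp_ideal hf).
rewrite comp_mpolyE raddf_sum mcoeff0 in h.
apply: etrans h; rewrite big_mkcond /=; apply: eq_bigr => mm _.
by rewrite mcoeffZ compX mcoeffX; case: (_ == _); rewrite ?mulr1 ?mulr0.
Qed.

Lemma other_in_fiber (f : {mpoly K[k]}) mm : toric_ideal eu ev f -> mm \in msupp f ->
  exists2 mm', mm' \in msupp f & (mm' != mm) /\ (forall x, A mm' x = A mm x).
Proof.
move=> hf hmm.
case: (boolP (has (fun mm' => (mm' != mm) && (Amap mm' == Amap mm)) (msupp f))).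
  case/hasP => mm' h1 /andP[h2 /eqP h3]; exists mm' => //; split => // x.
  by have := congr1 (fun t : 'X_{1..m} => t x) h3; rewrite !mnmE.
move/hasPn => hn; have := fiber_sum (Amap mm) hf.
rewrite big_mkcond (bigD1_seq mm) //= eqxx big1_seq ?addr0.
  by move/eqP => h0; move: hmm; rewrite mcoeff_msupp h0 ?eqxx.
move=> mm' /andP[h1 h3]; have := hn mm' h3; rewrite h1 /=.
by case: (_ == _).
Qed.

End Fiber.

Section GBproof.
Variables (K : fieldType) (m k : nat) (eu ev : 'I_k -> 'I_m).
Hypothesis Hloop : forall i, eu i != ev i.
Hypothesis Huniq : forall i j, [set eu i; ev i] = [set eu j; ev j] -> i = j.
Local Notation A := (edge_comb eu ev).
Local Notation I := (@toric_ideal K m k eu ev).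
Variable lt : rel 'X_{1..k}.
Hypothesis Hto : term_order lt.

Lemma lt_irr a : ~~ lt a a.
Proof. by case: Hto => h _ _ _ _; rewrite h. Qed.

Lemma lt_trans a b c : lt a b -> lt b c -> lt a c.
Proof. by case: Hto => _ h _ _ _; apply: h. Qed.

Lemma lt_total a b : a != b -> lt a b || lt b a.
Proof. by case: Hto => _ _ h _ _; apply: h. Qed.

Lemma le_not_lt a b : (a <= b)%MM -> ~~ lt b a.
Proof.
move=> h; set c := (b - a)%MM; have eb : b = (c + a)%MM by rewrite submK.
case: (eqVneq c 0%MM) => hc; first by rewrite eb hc add0m lt_irr.
case: Hto => _ _ _ hcomp h0.
have := hcomp _ _ a (h0 c hc); rewrite add0m -eb => hab.
by apply/negP => hba; have := lt_trans hab hba; rewrite (negbTE (lt_irr a)).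
Qed.

Lemma max_ex (s : seq 'X_{1..k}) : s != [::] ->
  exists2 x, x \in s & forall y, y \in s -> y != x -> lt y x.
Proof.
elim: s => [//|x s IH] _.
case: (eqVneq s [::]) => [->|hs].
  by exists x; rewrite ?mem_seq1 // => y; rewrite mem_seq1 => ->.
have [x' hx' hmax] := IH hs.
case: (boolP (lt x x')) => hxx.
  exists x'; first by rewrite inE hx' orbT.
  by move=> y; rewrite inE => /orP[/eqP->|]; [|apply: hmax].
case: (eqVneq x x') => [exx|nxx].
  exists x'; first by rewrite inE hx' orbT.
  by move=> y; rewrite inE => /orP[/eqP->|]; [rewrite exx eqxx|apply: hmax].
have hx'x : lt x' x by move: (lt_total nxx); rewrite (negbTE hxx).
exists x; first by rewrite inE eqxx.
move=> y; rewrite inE => /orP[/eqP->|hy]; first by rewrite eqxx.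
move=> _; case: (eqVneq y x') => [->//|nyx]; exact: lt_trans (hmax y hy nyx) hx'x.
Qed.

Lemma lead_ex (p : {mpoly K[k]}) : p != 0 -> exists mg, lead_mon lt p mg.
Proof.
move=> hp; have : msupp p != [::] by rewrite msupp_eq0.
by case/max_ex => x hx hmax; exists x; split.
Qed.

Lemma lead_uniq (p : {mpoly K[k]}) a b : lead_mon lt p a -> lead_mon lt p b -> a = b.
Proof.
move=> [ha hma] [hb hmb]; case: (eqVneq a b) => // nab.
have h1 := hmb a ha nab; have h2 := hma b hb ltac:(by rewrite eq_sym).
by have := lt_trans h1 h2; rewrite (negbTE (lt_irr a)).
Qed.

Lemma lem_anti (a b : 'X_{1..k}) : (a <= b)%MM -> (b <= a)%MM -> a = b.
Proof.
move=> /mnm_lepP h1 /mnm_lepP h2; apply/mnmP => i; apply/eqP; rewrite eqn_leq h1 h2.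
by [].
Qed.

Lemma I_binom a b : (forall x, A a x = A b x) -> I ('X_[a] - 'X_[b]).
Proof.
move=> h; exists [:: (1, 'X_[a] - 'X_[b])]; split.
  by move=> x; rewrite inE => /eqP -> /=; exists a, b.
by rewrite big_cons big_nil addr0 mul1r.
Qed.

Lemma lead_binom a b : lt a b ->
  lead_mon lt ('X_[a] - 'X_[b] : {mpoly K[k]}) b /\ ('X_[a] - 'X_[b] : {mpoly K[k]}) != 0.
Proof.
move=> hab; have nab : a != b by apply: contraTneq hab => ->; rewrite lt_irr.
have hb : b \in msupp ('X_[a] - 'X_[b] : {mpoly K[k]}).
  by rewrite mcoeff_msupp mcoeffB !mcoeffX eqxx (negbTE nab) sub0r oppr_eq0 oner_eq0.
split; last by apply: contraTneq hb => ->; rewrite msupp0.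
split => // y; rewrite mcoeff_msupp mcoeffB !mcoeffX => hy nyb.
move: hy; rewrite [b == y]eq_sym (negbTE nyb) subr0.
by case: (eqVneq a y) => [<- //|_]; rewrite /= eqxx.
Qed.

Variable G : seq {mpoly K[k]}.
Hypothesis HG : reduced_groebner lt I G.
Variable g : {mpoly K[k]}.
Hypothesis Hg : g \in G.
Variable mg : 'X_{1..k}.
Hypothesis Hmg : lead_mon lt g mg.

Lemma Std mm : mm \in msupp g -> mm != mg -> forall a b, (b <= mm)%MM ->
  (forall x, A a x = A b x) -> ~~ lt a b.
Proof.
move=> hmm nmm a b hb hab; apply/negP => hlt.
have hf := I_binom hab; have [hl hnz] := lead_binom hlt.
case: HG => _ H2 _ H4.
have [h hG [mh hmh hle]] := H2 _ hf hnz b hl.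
case: (eqVneq h g) => [ehg | nhg].
  rewrite ehg in hmh; have emh := lead_uniq hmh Hmg.
  rewrite emh in hle; have := le_not_lt (lepm_trans hle hb).
  by rewrite (Hmg.2 mm hmm nmm).
have := H4 g h Hg hG ltac:(by rewrite eq_sym) mh hmh mm hmm.
by rewrite (lepm_trans hle hb).
Qed.

Lemma Min a b : (a <= mg)%MM -> a != mg -> (forall x, A a x = A b x) -> ~~ lt b a.
Proof.
move=> ha nam hab; apply/negP => hlt.
have hf := I_binom (fun x => esym (hab x)); have [hl hnz] := lead_binom hlt.
case: HG => _ H2 _ H4.
have [h hG [mh hmh hle]] := H2 _ hf hnz a hl.
case: (eqVneq h g) => [ehg | nhg].
  rewrite ehg in hmh; have emh := lead_uniq hmh Hmg.
  rewrite emh in hle.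
  by move: nam; rewrite (lem_anti ha hle) eqxx.
have := H4 g h Hg hG ltac:(by rewrite eq_sym) mh hmh mg Hmg.1.
by rewrite (lepm_trans hle ha).
Qed.


Variable w : 'X_{1..k}.
Hypotheses (Hw : w \in msupp g) (Hwn : w != mg) (HAw : forall x, A w x = A mg x).

Lemma Prim a b : (a <= mg)%MM -> (b <= w)%MM -> (forall x, A a x = A b x) ->
  (a = 0%MM /\ b = 0%MM) \/ (a = mg /\ b = w).
Proof.
move=> ha hb hab.
case: (eqVneq a b) => [eab|nab].
  case: (eqVneq a 0%MM) => [a0|an0]; first by left; rewrite -eab a0.
  exfalso.
  set a' := (mg - a)%MM; set b' := (w - a)%MM.
  have hb' : (a <= w)%MM by rewrite eab.
  have hA' : forall x, A a' x = A b' x.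
    by move=> x; rewrite /a' /b' !A_sub // HAw.
  have nab' : a' != b'.
    apply: contra Hwn => /eqP e; apply/eqP.
    by rewrite -(submK hb') -(submK ha) -/a' -/b' e.
  case/orP: (lt_total nab') => hlt.
  - by move: (Std Hw Hwn (lem_subr _ _) hA'); rewrite hlt.
  - have na' : a' != mg.
      apply: contra an0 => /eqP e; rewrite -mdeg_eq0.
      have := mdegD a' a; rewrite /a' submK // -/a' e => h; apply/eqP; lia.
    by move: (Min (lem_subr _ _) na' hA'); rewrite hlt.
case/orP: (lt_total nab) => hlt.
  by move: (Std Hw Hwn hb hab); rewrite hlt.
case: (eqVneq a mg) => [eam|nam]; last by move: (Min ha nam hab); rewrite hlt.
right; split => //.
have hz : forall x, A (w - b)%MM x = 0%N.
  by move=> x; rewrite A_sub // HAw -eam hab subnn.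
have := A0_eq0 hz => e.
by rewrite -(submK hb) e add0m.
Qed.

End GBproof.


Unset Implicit Arguments.
Unset Strict Implicit.

Theorem corollary4p2 (K : fieldType) (m k : nat) (eu ev : 'I_k -> 'I_m) :
  (4 <= m)%N ->
  simple_graph eu ev ->
  forall g : {mpoly K[k]},
    in_universal_groebner (toric_ideal eu ev) g ->
    forall mm, mm \in msupp g -> (mdeg mm <= m - 2)%N.
Proof.
move=> _ [Hloop Huniq] g [lt [G [Hto HG Hg]]] mm Hmm.
have [HIg Hg0] : toric_ideal eu ev g /\ g != 0 by case: HG => H1 _ _ _; apply: H1.
have [mg Hmg] := lead_ex Hto Hg0.
have [w Hw [Hwn HAw]] := other_in_fiber HIg Hmg.1.
have hcore : (mdeg mg + 2 <= m)%N.
  apply: (core Hloop Huniq (u := mg) (w := w)).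
  - by move=> x; rewrite HAw.
  - by rewrite eq_sym.
  - move=> a b ha hb hab; exact: (Prim Hto HG Hg Hmg Hw Hwn HAw ha hb hab).
case: (eqVneq mm mg) => [->|nmm]; first by lia.
have [mm' Hmm' [nmm' HA']] := other_in_fiber HIg Hmm.
case: (eqVneq mm' mg) => [emg|nmg].
  by have := A_eq_mdeg HA'; rewrite emg => e; lia.
exfalso; case/orP: (lt_total Hto nmm') => hlt.
  have hle : (mm <= mm)%MM by apply: lepm_refl.
  by move: (Std Hto HG Hg Hmg Hmm nmm hle HA'); rewrite hlt.
have hle : (mm' <= mm')%MM by apply: lepm_refl.
by move: (Std Hto HG Hg Hmg Hmm' nmg hle (fun x => esym (HA' x))); rewrite hlt.
Qed.
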